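(* (a) Let $\mathbf{x}=(x_s)\in(\mathbb{C}^* )^{\mathbb{Z}^3}$ be a coherent solution of the Kashaev equation such that $x_vx_{v+e_i+e_j}+x_{v+e_i}x_{v+e_j}\neq0$ for all $v\in\mathbb{Z}^3$ and all distinct $i,j\in\{1,2,3\}$ (where $e_1,e_2,e_3$ are the standard basis vectors). Then $\mathbf{x}$ can be extended to an array $\tilde{\mathbf{x}}=(x_s)\in\mathbb{C}^L$ satisfying the K-hexahedron equations. (b) Conversely, if $\tilde{\mathbf{x}}=(x_s)\in\mathbb{C}^L$, with $x_s\neq0$ for all $s\in\mathbb{Z}^3$, satisfies the K-hexahedron equations, then the restriction of $\tilde{\mathbf{x}}$ to $\mathbb{Z}^3$ is a coherent solution of the Kashaev equation.
   Context: For a unit cube $C$ in $\mathbb{Z}^3$ and $\mathbf{x}\in\mathbb{C}^{\mathbb{Z}^3}$, label the values at the vertices of $C$ as $z_{ijk}$ ($i,j,k\in\{0,1\}$) via a cube isomorphism $C\cong\{0,1\}^3$; put $a=z_{000}z_{111}$, $b=z_{100}z_{011}$, $c=z_{010}z_{101}$, $d=z_{001}z_{110}$, $s=z_{000}z_{011}z_{101}z_{110}$, $t=z_{111}z_{100}z_{010}z_{001}$ and $K^C(\mathbf{x})=2(a^2+b^2+c^2+d^2)-(a+b+c+d)^2-4(s+t)$. For a vertex $v$ of $C$, choosing the labeling with $z_{000}=x_v$, set $K^C_v(\mathbf{x})=\tfrac12\big(z_{111}z_{000}^2-z_{000}(z_{100}z_{011}+z_{010}z_{101}+z_{001}z_{110})\big)-z_{100}z_{010}z_{001}$.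 An array $\mathbf{x}\in\mathbb{C}^{\mathbb{Z}^3}$ is a coherent solution of the Kashaev equation if $K^C(\mathbf{x})=0$ for every unit cube $C$ and, for every $v\in\mathbb{Z}^3$, $\prod_{C\ni v}K^C_v(\mathbf{x})=\prod_{S\ni v}(x_vx_{v_2}+x_{v_1}x_{v_3})$, the first product over the $8$ unit cubes containing $v$, the second over the $12$ unit squares $S$ containing $v$, with $v,v_1,v_2,v_3$ the vertices of $S$ in cyclic order. $L=\{(i,j,k)\in\mathbb{R}^3: 2i,2j,2k,i+j+k\in\mathbb{Z}\}=\mathbb{Z}^3+\{(0,0,0),(0,\tfrac12,\tfrac12),(\tfrac12,0,\tfrac12),(\tfrac12,\tfrac12,0)\}$, i.e. $\mathbb{Z}^3$ together with the centers of unit squares. An array $\tilde{\mathbf{x}}=(x_s)\in\mathbb{C}^L$ with $x_s\ne0$ for $s\in\mathbb{Z}^3$ satisfies the K-hexahedron equations if (i) for every $s\in L\setminus\mathbb{Z}^3$, $x_s^2=x_{v_1}x_{v_3}+x_{v_2}x_{v_4}$, where $v_1,v_2,v_3,v_4$ are the vertices, in cyclic order, of the unit square centered at $s$; and (ii) for every $v\in\mathbb{Z}^3$, writing $z_{ijk}=x_{v+(i,j,k)}$, $z_{1\frac12\frac12}=(z_{\frac120\frac12}z_{\frac12\frac120}+z_{0\frac12\frac12}z_{100})/z_{000}$, $z_{\frac121\frac12}=(z_{0\frac12\frac12}z_{\frac12\frac120}+z_{\frac120\frac12}z_{010})/z_{000}$, $z_{\frac12\frac121}=(z_{0\frac12\frac12}z_{\frac120\frac12}+z_{\frac12\frac120}z_{001})/z_{000}$,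 $z_{111}=(A+2z_{0\frac12\frac12}z_{\frac120\frac12}z_{\frac12\frac120})/z_{000}^2$, where $A=2z_{100}z_{010}z_{001}+z_{000}(z_{100}z_{011}+z_{010}z_{101}+z_{001}z_{110})$. *)

(* Defs.v *)
From HB Require Import structures.
From mathcomp Require Import all_boot all_order all_algebra.
From mathcomp Require Import complex.
From mathcomp Require Import Rstruct.
Set Implicit Arguments.
Unset Strict Implicit.
Unset Printing Implicit Defensive.
Import Order.TTheory GRing.Theory Num.Theory.
Local Open Scope ring_scope.

Definition CC : fieldType := (Rdefinitions.R)[i].

Definition arr3 := int -> int -> int -> CC.

Definition KC (x : arr3) (a b c : int) : CC :=
  let z i j k := x (a + i) (b + j) (c + k) in
  let A := z 0 0 0 * z 1 1 1 in
  let B := z 1 0 0 * z 0 1 1 in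
  let Cc := z 0 1 0 * z 1 0 1 in
  let D := z 0 0 1 * z 1 1 0 in
  let s := z 0 0 0 * z 0 1 1 * z 1 0 1 * z 1 1 0 in
  let t := z 1 1 1 * z 1 0 0 * z 0 1 0 * z 0 0 1 in
  2 * (A ^+ 2 + B ^+ 2 + Cc ^+ 2 + D ^+ 2) - (A + B + Cc + D) ^+ 2
    - 4 * (s + t).

(** The unit cubes containing v = (a,b,c) are indexed by sign vectors
    (e1,e2,e3) in {1,-1}^3: the cube with vertices v + (e1 i, e2 j, e3 k),
    i,j,k in {0,1}. *)
Definition KCv (x : arr3) (a b c e1 e2 e3 : int) : CC :=
  let z i j k := x (a + e1 * i) (b + e2 * j) (c + e3 * k) in
  2^-1 * (z 1 1 1 * z 0 0 0 ^+ 2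
          - z 0 0 0 * (z 1 0 0 * z 0 1 1 + z 0 1 0 * z 1 0 1 + z 0 0 1 * z 1 1 0))
  - z 1 0 0 * z 0 1 0 * z 0 0 1.

Definition signs : seq int := [:: 1; -1].

Definition cube_prod (x : arr3) (a b c : int) : CC :=
  \prod_(e1 <- signs) \prod_(e2 <- signs) \prod_(e3 <- signs)
     KCv x a b c e1 e2 e3.

Definition sq_term (x : arr3) (a b c : int) (p q : int * int * int) : CC :=
  let: (p1, p2, p3) := p in
  let: (q1, q2, q3) := q in
  x a b c * x (a + p1 + q1) (b + p2 + q2) (c + p3 + q3)
  + x (a + p1) (b + p2) (c + p3) * x (a + q1) (b + q2) (c + q3).

(** Product over the 12 unit squares containing v: in each of the three
    coordinate planes, the 4 squares spanned by e*e_i and d*e_j with signs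
    e,d in {1,-1}. *)
Definition square_prod (x : arr3) (a b c : int) : CC :=
  \prod_(e <- signs) \prod_(d <- signs)
    (sq_term x a b c (e, 0, 0) (0, d, 0)
     * sq_term x a b c (e, 0, 0) (0, 0, d)
     * sq_term x a b c (0, e, 0) (0, 0, d)).

Definition coherent_Kashaev (x : arr3) : Prop :=
  (forall a b c : int, KC x a b c = 0) /\
  (forall a b c : int, cube_prod x a b c = square_prod x a b c).

(** The lattice L = Z^3 + {(0,0,0),(0,1/2,1/2),(1/2,0,1/2),(1/2,1/2,0)} is
    represented in doubled coordinates: the point s in L corresponds to
    2s in Z^3 (which has even coordinate sum).  An array on L is a function
    y : int -> int -> int -> CC whose values at points with odd coordinate
    sum are irrelevant. *)
Definition restrZ3 (y : arr3) : arr3 := fun a b c => y (2 * a) (2 * b) (2 * c).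

(** Equations (i): every s in L \ Z^3 is the centre of exactly one unit
    square, of the form v + (0,1/2,1/2), v + (1/2,0,1/2) or v + (1/2,1/2,0)
    with v = (a,b,c) in Z^3; the vertices listed in cyclic order. *)
Definition Khex_i (y : arr3) : Prop :=
  forall a b c : int,
    let x := restrZ3 y in
    y (2 * a) (2 * b + 1) (2 * c + 1) ^+ 2
      = x a b c * x a (b + 1) (c + 1) + x a (b + 1) c * x a b (c + 1)
 /\ y (2 * a + 1) (2 * b) (2 * c + 1) ^+ 2
      = x a b c * x (a + 1) b (c + 1) + x (a + 1) b c * x a b (c + 1)
 /\ y (2 * a + 1) (2 * b + 1) (2 * c) ^+ 2
      = x a b c * x (a + 1) (b + 1) c + x (a + 1) b c * x a (b + 1) c.

Definition Khex_ii (y : arr3) : Prop :=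
  forall a b c : int,
    let z i j k := y (2 * a + i) (2 * b + j) (2 * c + k) in
    (* z i j k here takes DOUBLED offsets: z 2 1 1 = z_{1 1/2 1/2} *)
    let A := 2 * z 2 0 0 * z 0 2 0 * z 0 0 2
             + z 0 0 0 * (z 2 0 0 * z 0 2 2 + z 0 2 0 * z 2 0 2
                          + z 0 0 2 * z 2 2 0) in
    [/\ z 2 1 1 = (z 1 0 1 * z 1 1 0 + z 0 1 1 * z 2 0 0) / z 0 0 0,
        z 1 2 1 = (z 0 1 1 * z 1 1 0 + z 1 0 1 * z 0 2 0) / z 0 0 0,
        z 1 1 2 = (z 0 1 1 * z 1 0 1 + z 1 1 0 * z 0 0 2) / z 0 0 0 &
        z 2 2 2 = (A + 2 * z 0 1 1 * z 1 0 1 * z 1 1 0) / z 0 0 0 ^+ 2].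

Definition K_hexahedron (y : arr3) : Prop := Khex_i y /\ Khex_ii y.

(* Main.v *)
Require Import Defs.
From HB Require Import structures.
From mathcomp Require Import all_boot all_order all_algebra.
From mathcomp Require Import complex Rstruct.
From mathcomp Require Import ring zify.
From Stdlib Require Import FunctionalExtensionality.
Import GRing.Theory Num.Theory.
Local Open Scope ring_scope.

Lemma two_nz : (2 : CC) != 0.
Proof. by rewrite pnatr_eq0. Qed.

Definition Kfun (w000 w100 w010 w001 w011 w101 w110 w111 : CC) : CC :=
  2^-1 * (w111 * w000 ^+ 2 - w000 * (w100 * w011 + w010 * w101 + w001 * w110))
  - w100 * w010 * w001.

Definition KCfun (z000 z100 z010 z001 z011 z101 z110 z111 : CC) : CC :=
  let A := z000 * z111 in
  let B := z100 * z011 in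
  let Cc := z010 * z101 in
  let D := z001 * z110 in
  let s := z000 * z011 * z101 * z110 in
  let t := z111 * z100 * z010 * z001 in
  2 * (A ^+ 2 + B ^+ 2 + Cc ^+ 2 + D ^+ 2) - (A + B + Cc + D) ^+ 2
    - 4 * (s + t).

Lemma cube_alg (z000 z100 z010 z001 z011 z101 z110 z111 fx fy fz gx gy gz : CC) :
  z000 != 0 ->
  fx ^+ 2 = z000 * z011 + z010 * z001 ->
  fy ^+ 2 = z000 * z101 + z100 * z001 ->
  fz ^+ 2 = z000 * z110 + z100 * z010 ->
  z111 * z000 ^+ 2 = 2 * z100 * z010 * z001
      + z000 * (z100 * z011 + z010 * z101 + z001 * z110) + 2 * fx * fy * fz ->
  gx = (fy * fz + fx * z100) / z000 ->
  gy = (fx * fz + fy * z010) / z000 ->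
  gz = (fx * fy + fz * z001) / z000 ->
  (KCfun z000 z100 z010 z001 z011 z101 z110 z111 = 0 /\
      gx ^+ 2 = z100 * z111 + z110 * z101 /\
      gy ^+ 2 = z010 * z111 + z110 * z011 /\
      gz ^+ 2 = z001 * z111 + z101 * z011) /\
      (Kfun z000 z100 z010 z001 z011 z101 z110 z111 = fx * fy * fz /\
       Kfun z100 z000 z110 z101 z111 z001 z010 z011 = - (gx * fy * fz) /\
       Kfun z010 z110 z000 z011 z001 z111 z100 z101 = - (fx * gy * fz) /\
       Kfun z001 z101 z011 z000 z010 z100 z111 z110 = - (fx * fy * gz) /\
       Kfun z110 z010 z100 z111 z101 z011 z000 z001 = - (gx * gy * fz) /\
       Kfun z101 z001 z111 z100 z110 z000 z011 z010 = - (gx * fy * gz) /\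
       Kfun z011 z111 z001 z010 z000 z110 z101 z100 = - (fx * gy * gz) /\
       Kfun z111 z011 z101 z110 z100 z010 z001 z000 = gx * gy * gz).
Proof.
move=> nz Hx Hy Hz H111 -> -> ->.
have E011 : z011 = (fx ^+ 2 - z010 * z001) / z000 by rewrite Hx; field.
have E101 : z101 = (fy ^+ 2 - z100 * z001) / z000 by rewrite Hy; field.
have E110 : z110 = (fz ^+ 2 - z100 * z010) / z000 by rewrite Hz; field.
have E111 : z111 = (2 * z100 * z010 * z001
      + z000 * (z100 * z011 + z010 * z101 + z001 * z110) + 2 * fx * fy * fz) / z000 ^+ 2.
  by rewrite -H111; field.
rewrite E111 E011 E101 E110 /Kfun /KCfun.
split; [split; [|split; [|split]] | split; [|split; [|split; [|split; [|split; [|split; [|split]]]]]]].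
all: field.
all: rewrite ?nz //=; exact: two_nz.
Qed.

Lemma Ksq_alg (z000 z100 z010 z001 z011 z101 z110 z111 : CC) :
  4 * ((Kfun z000 z100 z010 z001 z011 z101 z110 z111) ^+ 2
   - (z000 * z011 + z010 * z001) * (z000 * z101 + z100 * z001) * (z000 * z110 + z100 * z010))
  = z000 ^+ 2 * KCfun z000 z100 z010 z001 z011 z101 z110 z111.
Proof. by rewrite /Kfun /KCfun; field. Qed.

Definition Fx (x : arr3) a b c := x a b c * x a (b+1) (c+1) + x a (b+1) c * x a b (c+1).
Definition Fy (x : arr3) a b c := x a b c * x (a+1) b (c+1) + x (a+1) b c * x a b (c+1).
Definition Fz (x : arr3) a b c := x a b c * x (a+1) (b+1) c + x (a+1) b c * x a (b+1) c.
Definition Kx (x : arr3) a b c := KCv x a b c 1 1 1.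

Lemma KCv_Kfun x a b c e1 e2 e3 : KCv x a b c e1 e2 e3 =
  Kfun (x a b c) (x (a+e1) b c) (x a (b+e2) c) (x a b (c+e3)) (x a (b+e2) (c+e3))
       (x (a+e1) b (c+e3)) (x (a+e1) (b+e2) c) (x (a+e1) (b+e2) (c+e3)).
Proof. by rewrite /KCv /Kfun !mulr1 !mulr0 !addr0. Qed.

Lemma KC_KCfun x a b c : KC x a b c =
  KCfun (x a b c) (x (a+1) b c) (x a (b+1) c) (x a b (c+1)) (x a (b+1) (c+1))
       (x (a+1) b (c+1)) (x (a+1) (b+1) c) (x (a+1) (b+1) (c+1)).
Proof. by rewrite /KC /KCfun !addr0. Qed.

Definition Aterm (x : arr3) p q r :=
  2 * x (p+1) q r * x p (q+1) r * x p q (r+1)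
  + x p q r * (x (p+1) q r * x p (q+1) (r+1) + x p (q+1) r * x (p+1) q (r+1)
               + x p q (r+1) * x (p+1) (q+1) r).

Lemma cube_x (x : arr3) p q r fx fy fz gx gy gz :
  x p q r != 0 ->
  fx ^+ 2 = Fx x p q r -> fy ^+ 2 = Fy x p q r -> fz ^+ 2 = Fz x p q r ->
  x (p+1) (q+1) (r+1) * x p q r ^+ 2 = Aterm x p q r + 2 * fx * fy * fz ->
  gx = (fy * fz + fx * x (p+1) q r) / x p q r ->
  gy = (fx * fz + fy * x p (q+1) r) / x p q r ->
  gz = (fx * fy + fz * x p q (r+1)) / x p q r ->
  (KC x p q r = 0 /\ gx ^+ 2 = Fx x (p+1) q r /\ gy ^+ 2 = Fy x p (q+1) r /\
   gz ^+ 2 = Fz x p q (r+1)) /\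
  (KCv x p q r 1 1 1 = fx * fy * fz /\
   KCv x (p+1) q r (-1) 1 1 = - (gx * fy * fz) /\
   KCv x p (q+1) r 1 (-1) 1 = - (fx * gy * fz) /\
   KCv x p q (r+1) 1 1 (-1) = - (fx * fy * gz) /\
   KCv x (p+1) (q+1) r (-1) (-1) 1 = - (gx * gy * fz) /\
   KCv x (p+1) q (r+1) (-1) 1 (-1) = - (gx * fy * gz) /\
   KCv x p (q+1) (r+1) 1 (-1) (-1) = - (fx * gy * gz) /\
   KCv x (p+1) (q+1) (r+1) (-1) (-1) (-1) = gx * gy * gz).
Proof.
move=> nz Hx Hy Hz H111 Hgx Hgy Hgz.
rewrite KC_KCfun !KCv_Kfun /Fx /Fy /Fz !addrK.
by apply: cube_alg.
Qed.

Lemma Ksq_x (x : arr3) p q r : KC x p q r = 0 ->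
  Kx x p q r ^+ 2 = Fx x p q r * Fy x p q r * Fz x p q r.
Proof.
move=> H; rewrite /Kx KCv_Kfun ?mulr1.
have := Ksq_alg (x p q r) (x (p+1) q r) (x p (q+1) r) (x p q (r+1)) (x p (q+1) (r+1))
       (x (p+1) q (r+1)) (x (p+1) (q+1) r) (x (p+1) (q+1) (r+1)).
rewrite -KC_KCfun H mulr0 /Fx /Fy /Fz => /eqP.
rewrite mulf_eq0 subr_eq0 => /orP [|/eqP //].
by rewrite pnatr_eq0.
Qed.

Lemma Kdef_x (x : arr3) p q r : x p q r != 0 ->
  x (p+1) (q+1) (r+1) * x p q r ^+ 2 = Aterm x p q r + 2 * Kx x p q r.
Proof.
move=> nz; rewrite /Kx KCv_Kfun ?mulr1 /Kfun /Aterm.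
by field; rewrite ?nz /=; try exact: two_nz.
Qed.

Lemma square_prod_eq x p q r : square_prod x (p+1) (q+1) (r+1) =
  (Fz x (p+1) (q+1) (r+1) * Fz x (p+1) q (r+1) * Fz x p (q+1) (r+1) * Fz x p q (r+1)) *
  (Fy x (p+1) (q+1) (r+1) * Fy x (p+1) (q+1) r * Fy x p (q+1) (r+1) * Fy x p (q+1) r) *
  (Fx x (p+1) (q+1) (r+1) * Fx x (p+1) (q+1) r * Fx x (p+1) q (r+1) * Fx x (p+1) q r).
Proof.
rewrite /square_prod /signs !big_cons !big_nil /sq_term /=.
rewrite !addr0 !addrK /Fx /Fy /Fz.
ring.
Qed.

Definition fX (y : arr3) a b c := y (2*a) (2*b+1) (2*c+1).
Definition fY (y : arr3) a b c := y (2*a+1) (2*b) (2*c+1).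
Definition fZ (y : arr3) a b c := y (2*a+1) (2*b+1) (2*c).

Lemma two_step (t : int) : 2 * t + 2 = 2 * (t + 1).
Proof. by rewrite mulrDr mulr1. Qed.

Lemma Khex_ii_x y a b c : Khex_ii y -> restrZ3 y a b c != 0 ->
  let x := restrZ3 y in
  [/\ fX y (a+1) b c = (fY y a b c * fZ y a b c + fX y a b c * x (a+1) b c) / x a b c,
      fY y a (b+1) c = (fX y a b c * fZ y a b c + fY y a b c * x a (b+1) c) / x a b c,
      fZ y a b (c+1) = (fX y a b c * fY y a b c + fZ y a b c * x a b (c+1)) / x a b c &
      x (a+1) (b+1) (c+1) * x a b c ^+ 2 = Aterm x a b c + 2 * fX y a b c * fY y a b c * fZ y a b c].
Proof.
move=> H nz x; have := H a b c; rewrite /= !addr0 !two_step.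
move=> [E1 E2 E3 E4]; split.
- exact: E1.
- exact: E2.
- exact: E3.
- rewrite [X in X * _]E4 divfK; last by rewrite expf_eq0.
  by rewrite /Aterm /x /restrZ3 /fX /fY /fZ; ring.
Qed.

Lemma partb (y : arr3) : (forall a b c : int, restrZ3 y a b c != 0) ->
  K_hexahedron y -> coherent_Kashaev (restrZ3 y).
Proof.
move=> nz [Hi Hii].
have Sx : forall a b c, Fx (restrZ3 y) a b c = fX y a b c ^+ 2.
  by move=> a b c; have [-> _] := Hi a b c.
have Sy : forall a b c, Fy (restrZ3 y) a b c = fY y a b c ^+ 2.
  by move=> a b c; have [_ [-> _]] := Hi a b c.
have Sz : forall a b c, Fz (restrZ3 y) a b c = fZ y a b c ^+ 2.
  by move=> a b c; have [_ [_ ->]] := Hi a b c.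
have C : forall p q r, _ := fun p q r =>
  let: And4 E1 E2 E3 E4 := @Khex_ii_x y p q r Hii (nz p q r) in
  @cube_x (restrZ3 y) p q r (fX y p q r) (fY y p q r) (fZ y p q r)
    (fX y (p+1) q r) (fY y p (q+1) r) (fZ y p q (r+1)) (nz p q r)
    (esym (Sx p q r)) (esym (Sy p q r)) (esym (Sz p q r)) E4 E1 E2 E3.
split.
  by move=> a b c; have [[-> _] _] := C a b c.
suff coh : forall p q r, cube_prod (restrZ3 y) (p+1) (q+1) (r+1)
                       = square_prod (restrZ3 y) (p+1) (q+1) (r+1).
  by move=> a b c; have := coh (a-1) (b-1) (c-1); rewrite !subrK.
move=> p q r.
rewrite square_prod_eq /cube_prod /signs !big_cons !big_nil.
have [_ [E000 _]] := C (p+1) (q+1) (r+1).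
have [_ [_ [E100 _]]] := C p (q+1) (r+1).
have [_ [_ [_ [E010 _]]]] := C (p+1) q (r+1).
have [_ [_ [_ [_ [E001 _]]]]] := C (p+1) (q+1) r.
have [_ [_ [_ [_ [_ [E110 _]]]]]] := C p q (r+1).
have [_ [_ [_ [_ [_ [_ [E101 _]]]]]]] := C p (q+1) r.
have [_ [_ [_ [_ [_ [_ [_ [E011 _]]]]]]]] := C (p+1) q r.
have [_ [_ [_ [_ [_ [_ [_ [_ E111]]]]]]]] := C p q r.
rewrite E000 E100 E010 E001 E110 E101 E011 E111 !Sx !Sy !Sz.
ring.
Qed.
Lemma int_ind2 (P : int -> Prop) : P 0 -> (forall n, P n -> P (n+1)) ->
  (forall n, P (n+1) -> P n) -> forall n, P n.
Proof.
move=> P0 Hs Hp [k|k].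
- elim: k => [//|k IH].
  have -> : Posz k.+1 = Posz k + 1 by lia.
  exact: Hs.
- elim: k => [|k IH].
  + apply: Hp; have -> : Negz 0 + 1 = 0 by lia.
    done.
  + apply: Hp; have -> : Negz k.+1 + 1 = Negz k by lia.
    done.
Qed.

Lemma int_const (g : int -> CC) : (forall n, g (n+1) = g n) -> forall n, g n = g 0.
Proof.
move=> H; apply: int_ind2 => // n IH; first by rewrite H.
by rewrite -IH H.
Qed.

Definition line (R : int -> CC) (s0 : CC) (n : int) : CC :=
  match n with
  | Posz k => s0 * \prod_(i < k) R (Posz i)
  | Negz k => s0 / \prod_(i < k.+1) R (Negz i)
  end.

Lemma line0 R s0 : line R s0 0 = s0.
Proof. by rewrite /line /= big_ord0 mulr1. Qed.

Lemma line_succ R s0 : (forall n, R n != 0) ->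
  forall n, line R s0 (n + 1) = R n * line R s0 n.
Proof.
move=> nz [k|k].
- have -> : Posz k + 1 = Posz k.+1 by lia.
  by rewrite /line big_ord_recr /=; ring.
- case: k => [|k].
  + have -> : Negz 0 + 1 = 0 by lia.
    rewrite line0 /line big_ord_recr big_ord0 /= mul1r.
    by field; rewrite nz.
  + have -> : Negz k.+1 + 1 = Negz k by lia.
    rewrite /line [in RHS]big_ord_recr /=.
    have nzP : \prod_(i < k.+1) R (Negz i) != 0.
      by rewrite prodf_seq_neq0; apply/allP => i _; rewrite nz.
    by field; rewrite nzP nz.
Qed.

Lemma line_sq R s0 (G : int -> CC) : (forall n, R n != 0) ->
  (forall n, G (n+1) = R n ^+ 2 * G n) -> s0 ^+ 2 = G 0 ->
  forall n, line R s0 n ^+ 2 = G n.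
Proof.
move=> nz HG H0; apply: int_ind2; first by rewrite line0.
- by move=> n IH; rewrite line_succ // HG -IH exprMn.
- move=> n; rewrite line_succ // HG exprMn => /mulfI; apply.
  by rewrite expf_eq0 nz.
Qed.

Lemma sgn_inv (s t : CC) : s ^+ 2 = 1 -> s * t = 1 -> t = s.
Proof.
move=> s2 st.
by rewrite -[t]mul1r -s2 expr2 -mulrA st mulr1.
Qed.

Lemma sgn_mul (s t : CC) : s ^+ 2 = 1 -> t ^+ 2 = 1 -> (s * t) ^+ 2 = 1.
Proof. by move=> hs ht; rewrite exprMn hs ht mulr1. Qed.

Lemma gauge2 (nu : int -> int -> CC) : (forall b c, nu b c ^+ 2 = 1) ->
  (forall b c, nu b c * nu (b+1) c * nu b (c+1) * nu (b+1) (c+1) = 1) ->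
  forall b c, nu b c = nu b 0 * nu 0 c * nu 0 0.
Proof.
move=> sq blk b c.
have dc : forall c', nu b c' * nu b (c'+1) = nu 0 c' * nu 0 (c'+1).
  move=> c'.
  apply: (int_const (fun b' => nu b' c' * nu b' (c'+1))) => b' /=.
  apply: sgn_inv; first exact: sgn_mul.
  by rewrite -(blk b' c'); ring.
have hc : forall c', nu b c' * nu 0 c' = nu b 0 * nu 0 0.
  apply: (int_const (fun c' => nu b c' * nu 0 c')) => c' /=.
  have e1 : nu b (c'+1) = nu b c' * (nu b c' * nu b (c'+1)).
    by rewrite mulrA -expr2 sq mul1r.
  have e2 : nu 0 (c'+1) = nu 0 c' * (nu 0 c' * nu 0 (c'+1)).
    by rewrite mulrA -expr2 sq mul1r.
  rewrite e1 e2 dc.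
  have := sq 0 c'; have := sq 0 (c'+1); rewrite !expr2 => h1 h2.
  transitivity (nu b c' * nu 0 c' * ((nu 0 c' * nu 0 c') * (nu 0 (c'+1) * nu 0 (c'+1)))).
    by ring.
  by rewrite h1 h2 !mulr1.
transitivity ((nu b c * nu 0 c) * nu 0 c); first by rewrite -mulrA -expr2 sq mulr1.
by rewrite hc; ring.
Qed.

Lemma gauge3 (pi : int -> int -> int -> CC) : (forall a b c, pi a b c ^+ 2 = 1) ->
  (forall p q r, pi p q r * pi (p+1) q r * pi p (q+1) r * pi (p+1) (q+1) r *
     pi p q (r+1) * pi (p+1) q (r+1) * pi p (q+1) (r+1) * pi (p+1) (q+1) (r+1) = 1) ->
  forall a b c, pi a b c = pi 0 b c * pi a 0 c * pi 0 0 c * pi a b 0 * pi 0 b 0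
                           * pi a 0 0 * pi 0 0 0.
Proof.
move=> sq blk a.
pose nu b c := pi a b c * pi 0 b c.
have nusq : forall b c, nu b c ^+ 2 = 1 by move=> b c; apply: sgn_mul.
pose s a' b c := pi a' b c * pi a' (b+1) c * pi a' b (c+1) * pi a' (b+1) (c+1).
have ssq : forall a' b c, s a' b c ^+ 2 = 1.
  by move=> a' b c; rewrite /s; do 3! apply: sgn_mul => //.
have sc : forall b c, s a b c = s 0 b c.
  move=> b c; apply: (int_const (fun a' => s a' b c)) => a' /=.
  apply: sgn_inv; first exact: ssq.
  by rewrite -(blk a' b c) /s; ring.
have nublk : forall b c, nu b c * nu (b+1) c * nu b (c+1) * nu (b+1) (c+1) = 1.
  move=> b c.
  transitivity (s a b c * s 0 b c); first by rewrite /nu /s; ring.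
  by rewrite sc -expr2 ssq.
move=> b c.
have := @gauge2 nu nusq nublk b c; rewrite /nu => E.
transitivity (pi a b c * pi 0 b c * pi 0 b c).
  by rewrite -mulrA -expr2 sq mulr1.
by rewrite E; ring.
Qed.

Definition Rx (x : arr3) a b c := (Kx x a b c / Fx x a b c + x (a+1) b c) / x a b c.
Definition Ry (x : arr3) a b c := (Kx x a b c / Fy x a b c + x a (b+1) c) / x a b c.
Definition Rz (x : arr3) a b c := (Kx x a b c / Fz x a b c + x a b (c+1)) / x a b c.

Lemma sq_nz (z : CC) : z ^+ 2 != 0 -> z != 0.
Proof. by rewrite expf_eq0. Qed.

Lemma K_nz (x : arr3) a b c : KC x a b c = 0 ->
  Fx x a b c != 0 -> Fy x a b c != 0 -> Fz x a b c != 0 -> Kx x a b c != 0.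
Proof.
move=> H nx ny nz; apply: sq_nz; rewrite Ksq_x //.
by rewrite !mulf_neq0.
Qed.

Lemma R_sq (x : arr3) a b c : x a b c != 0 -> KC x a b c = 0 ->
  Fx x a b c != 0 -> Fy x a b c != 0 -> Fz x a b c != 0 ->
  [/\ Rx x a b c ^+ 2 * Fx x a b c = Fx x (a+1) b c,
      Ry x a b c ^+ 2 * Fy x a b c = Fy x a (b+1) c &
      Rz x a b c ^+ 2 * Fz x a b c = Fz x a b (c+1)].
Proof.
move=> nz0 HK nx ny nzz.
have nK := @K_nz x a b c HK nx ny nzz.
set fx := sqrtC (Fx x a b c); set fy := sqrtC (Fy x a b c).
set K := Kx x a b c.
have efx : Fx x a b c = fx ^+ 2 by rewrite sqrtCK.
have efy : Fy x a b c = fy ^+ 2 by rewrite sqrtCK.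
have nfx : fx != 0 by apply: sq_nz; rewrite -efx.
have nfy : fy != 0 by apply: sq_nz; rewrite -efy.
set fz := K / (fx * fy).
have efz : Fz x a b c = fz ^+ 2.
  have KK := @Ksq_x x a b c HK; rewrite -/K in KK.
  apply: (mulfI (mulf_neq0 nx ny)).
  by rewrite -KK /fz efx efy; field; rewrite nfx nfy.
have nfz : fz != 0 by apply: sq_nz; rewrite -efz.
have H111 : x (a+1) (b+1) (c+1) * x a b c ^+ 2 = Aterm x a b c + 2 * fx * fy * fz.
  by rewrite Kdef_x // -/K /fz; congr (_ + _); field; rewrite ?nfx ?nfy.
have Hgx : fx * Rx x a b c = (fy * fz + fx * x (a+1) b c) / x a b c.
  by rewrite /Rx -/K efx /fz; field; rewrite nz0 nfx nfy.
have Hgy : fy * Ry x a b c = (fx * fz + fy * x a (b+1) c) / x a b c.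
  by rewrite /Ry -/K efy /fz; field; rewrite nz0 nfx nfy.
have Hgz : fz * Rz x a b c = (fx * fy + fz * x a b (c+1)) / x a b c.
  rewrite /Rz -/K efz /fz; field; rewrite nz0 nfx nfy //=.

have := @cube_x x a b c fx fy fz (fx * Rx x a b c) (fy * Ry x a b c) (fz * Rz x a b c)
  nz0 (esym efx) (esym efy) (esym efz) H111 Hgx Hgy Hgz.
move=> [[_ [Gx [Gy Gz]]] _].

constructor.
- by rewrite -Gx efx; ring.
- by rewrite -Gy efy; ring.
- by rewrite -Gz efz; ring.
Qed.

Definition Good (x : arr3) :=
  [/\ (forall a b c, x a b c != 0), (forall a b c, KC x a b c = 0),
      (forall a b c, cube_prod x a b c = square_prod x a b c) &
      (forall a b c, [/\ Fx x a b c != 0, Fy x a b c != 0 & Fz x a b c != 0])].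

Definition Px (x : arr3) a b c := line (fun n => Rx x n b c) (sqrtC (Fx x 0 b c)) a.
Definition Py (x : arr3) a b c := line (fun n => Ry x a n c) (sqrtC (Fy x a 0 c)) b.
Definition Pz (x : arr3) a b c := line (fun n => Rz x a b n) (sqrtC (Fz x a b 0)) c.

Section PartA.
End PartA.

Lemma Rsq_good x a b c : Good x ->
  [/\ Rx x a b c ^+ 2 * Fx x a b c = Fx x (a+1) b c,
      Ry x a b c ^+ 2 * Fy x a b c = Fy x a (b+1) c &
      Rz x a b c ^+ 2 * Fz x a b c = Fz x a b (c+1)].
Proof.
move=> [nzx HK _ nzF]; have [nx ny nz] := nzF a b c.
exact: R_sq.
Qed.

Lemma R_nz x a b c : Good x ->
  [/\ Rx x a b c != 0, Ry x a b c != 0 & Rz x a b c != 0].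
Proof.
move=> G; have [Ex Ey Ez] := Rsq_good x a b c G.
have [_ _ _ nzF] := G.
have [nx1 _ _] := nzF (a+1) b c; have [_ ny1 _] := nzF a (b+1) c.
have [_ _ nz1] := nzF a b (c+1).
split; apply: sq_nz.
- by move: nx1; rewrite -Ex; apply: contra => /eqP ->; rewrite mul0r.
- by move: ny1; rewrite -Ey; apply: contra => /eqP ->; rewrite mul0r.
- by move: nz1; rewrite -Ez; apply: contra => /eqP ->; rewrite mul0r.
Qed.

Lemma P_sq x a b c : Good x ->
  [/\ Px x a b c ^+ 2 = Fx x a b c, Py x a b c ^+ 2 = Fy x a b c &
      Pz x a b c ^+ 2 = Fz x a b c].
Proof.
move=> G; split.
- apply: (@line_sq _ _ (fun n => Fx x n b c)).
  + by move=> n; have [] := R_nz x n b c G.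
  + by move=> n; have [<- _ _] := Rsq_good x n b c G.
  + by rewrite sqrtCK.
- apply: (@line_sq _ _ (fun n => Fy x a n c)).
  + by move=> n; have [] := R_nz x a n c G.
  + by move=> n; have [_ <- _] := Rsq_good x a n c G.
  + by rewrite sqrtCK.
- apply: (@line_sq _ _ (fun n => Fz x a b n)).
  + by move=> n; have [] := R_nz x a b n G.
  + by move=> n; have [_ _ <-] := Rsq_good x a b n G.
  + by rewrite sqrtCK.
Qed.

Lemma P_succ x a b c : Good x ->
  [/\ Px x (a+1) b c = Rx x a b c * Px x a b c,
      Py x a (b+1) c = Ry x a b c * Py x a b c &
      Pz x a b (c+1) = Rz x a b c * Pz x a b c].
Proof.
move=> G; split.
- by apply: line_succ => n; have [] := R_nz x n b c G.
- by apply: line_succ => n; have [] := R_nz x a n c G.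
- by apply: line_succ => n; have [] := R_nz x a b n G.
Qed.

Lemma P_nz x a b c : Good x ->
  [/\ Px x a b c != 0, Py x a b c != 0 & Pz x a b c != 0].
Proof.
move=> G; have [Ex Ey Ez] := P_sq x a b c G; have [_ _ _ nzF] := G.
have [nx ny nz] := nzF a b c.
by split; apply: sq_nz; rewrite ?Ex ?Ey ?Ez.
Qed.

Definition Pi (x : arr3) a b c := Px x a b c * Py x a b c * Pz x a b c / Kx x a b c.

Lemma Kx_nz x a b c : Good x -> Kx x a b c != 0.
Proof.
move=> [_ HK _ nzF]; have [nx ny nz] := nzF a b c.
exact: K_nz.
Qed.

Lemma Pi_sq x a b c : Good x -> Pi x a b c ^+ 2 = 1.
Proof.
move=> G; have [Ex Ey Ez] := P_sq x a b c G.
have nK := Kx_nz x a b c G.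
have [_ HK _ _] := G.
rewrite /Pi !exprMn exprVn Ex Ey Ez -Ksq_x //.
by rewrite mulfV // expf_eq0.
Qed.

Lemma K_Pi x a b c : Good x ->
  Kx x a b c = Pi x a b c * (Px x a b c * Py x a b c * Pz x a b c).
Proof.
move=> G; have nK := Kx_nz x a b c G.
have S := Pi_sq x a b c G.
have E : Px x a b c * Py x a b c * Pz x a b c = Pi x a b c * Kx x a b c.
  by rewrite /Pi divfK.
by rewrite E mulrA -expr2 S mul1r.
Qed.

Lemma cube_pi x p q r : Good x ->
  let s := Pi x p q r in
  let fx := Px x p q r in let fy := Py x p q r in let fz := s * Pz x p q r in
  let gx := Px x (p+1) q r in let gy := Py x p (q+1) r in
  let gz := s * Pz x p q (r+1) in
  (KCv x p q r 1 1 1 = fx * fy * fz /\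
   KCv x (p+1) q r (-1) 1 1 = - (gx * fy * fz) /\
   KCv x p (q+1) r 1 (-1) 1 = - (fx * gy * fz) /\
   KCv x p q (r+1) 1 1 (-1) = - (fx * fy * gz) /\
   KCv x (p+1) (q+1) r (-1) (-1) 1 = - (gx * gy * fz) /\
   KCv x (p+1) q (r+1) (-1) 1 (-1) = - (gx * fy * gz) /\
   KCv x p (q+1) (r+1) 1 (-1) (-1) = - (fx * gy * gz) /\
   KCv x (p+1) (q+1) (r+1) (-1) (-1) (-1) = gx * gy * gz).
Proof.
move=> G s fx fy fz gx gy gz.
have [nzx _ _ _] := G.
have nz0 := nzx p q r.
have [Ex Ey Ez] := P_sq x p q r G.
have [nPx nPy nPz] := P_nz x p q r G.
have [Sx Sy Sz] := P_succ x p q r G.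
have S : s * s = 1 by rewrite -expr2 Pi_sq.
have KP := K_Pi x p q r G; rewrite -/s in KP.
have H111 : x (p+1) (q+1) (r+1) * x p q r ^+ 2 = Aterm x p q r + 2 * fx * fy * fz.
  by rewrite Kdef_x // KP /fx /fy /fz; ring.
have Hfz : fz ^+ 2 = Fz x p q r by rewrite /fz exprMn Ez (Pi_sq x p q r G) mul1r.
have Hgx : gx = (fy * fz + fx * x (p+1) q r) / x p q r.
  rewrite /gx Sx /Rx KP -Ex /fx /fy /fz; field.
  by rewrite nz0 nPx.
have Hgy : gy = (fx * fz + fy * x p (q+1) r) / x p q r.
  rewrite /gy Sy /Ry KP -Ey /fx /fy /fz; field.
  by rewrite nz0 nPy.
have Hgz : gz = (fx * fy + fz * x p q (r+1)) / x p q r.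
  rewrite /gz Sz /Rz KP -Ez /fx /fy /fz.
  transitivity ((s * s) * (Px x p q r * Py x p q r) / x p q r
                + s * Pz x p q r * x p q (r+1) / x p q r).
    by field; rewrite nz0 nPz.
  by rewrite S mul1r; field.
have [_ R] := @cube_x x p q r fx fy fz gx gy gz nz0 Ex Ey Hfz H111 Hgx Hgy Hgz.
exact: R.
Qed.

Lemma Pi_block x p q r : Good x ->
  Pi x p q r * Pi x (p+1) q r * Pi x p (q+1) r * Pi x (p+1) (q+1) r *
  Pi x p q (r+1) * Pi x (p+1) q (r+1) * Pi x p (q+1) (r+1) * Pi x (p+1) (q+1) (r+1) = 1.
Proof.
move=> G; have [nzx HK Hcoh nzF] := G.
have nFx : forall a b c, Fx x a b c != 0 by move=> a b c; case: (nzF a b c).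
have nFy : forall a b c, Fy x a b c != 0 by move=> a b c; case: (nzF a b c).
have nFz : forall a b c, Fz x a b c != 0 by move=> a b c; case: (nzF a b c).
have HQ : square_prod x (p+1) (q+1) (r+1) != 0.
  by rewrite square_prod_eq !mulf_neq0.
have PFx : forall a b c, Fx x a b c = Px x a b c ^+ 2.
  by move=> a b c; case: (P_sq x a b c G).
have PFy : forall a b c, Fy x a b c = Py x a b c ^+ 2.
  by move=> a b c; case: (P_sq x a b c G).
have PFz : forall a b c, Fz x a b c = Pz x a b c ^+ 2.
  by move=> a b c; case: (P_sq x a b c G).
set PP := (X in X = 1).
suff E : PP * square_prod x (p+1) (q+1) (r+1) = cube_prod x (p+1) (q+1) (r+1).
  move: E; rewrite Hcoh => /eqP.
  by rewrite -{2}[square_prod _ _ _ _]mul1r (inj_eq (mulIf HQ)) => /eqP.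
rewrite square_prod_eq /cube_prod /signs !big_cons !big_nil.
have C : forall a b c, _ := fun a b c => cube_pi x a b c G.
have [E000 _] := C (p+1) (q+1) (r+1).
have [_ [E100 _]] := C p (q+1) (r+1).
have [_ [_ [E010 _]]] := C (p+1) q (r+1).
have [_ [_ [_ [E001 _]]]] := C (p+1) (q+1) r.
have [_ [_ [_ [_ [E110 _]]]]] := C p q (r+1).
have [_ [_ [_ [_ [_ [E101 _]]]]]] := C p (q+1) r.
have [_ [_ [_ [_ [_ [_ [E011 _]]]]]]] := C (p+1) q r.
have [_ [_ [_ [_ [_ [_ [_ E111]]]]]]] := C p q r.
rewrite E000 E100 E010 E001 E110 E101 E011 E111 !PFx !PFy !PFz /PP.
ring.
Qed.

Definition lamx (x : arr3) (b c : int) := Pi x 0 b c.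
Definition lamy (x : arr3) (a c : int) := Pi x a 0 c * Pi x 0 0 c.
Definition lamz (x : arr3) (a b : int) := Pi x a b 0 * Pi x 0 b 0 * Pi x a 0 0 * Pi x 0 0 0.
Definition gX (x : arr3) a b c := lamx x b c * Px x a b c.
Definition gY (x : arr3) a b c := lamy x a c * Py x a b c.
Definition gZ (x : arr3) a b c := lamz x a b * Pz x a b c.

Lemma g_props x a b c : Good x ->
  [/\ gX x a b c ^+ 2 = Fx x a b c, gY x a b c ^+ 2 = Fy x a b c,
      gZ x a b c ^+ 2 = Fz x a b c,
      [/\ gX x (a+1) b c = Rx x a b c * gX x a b c,
          gY x a (b+1) c = Ry x a b c * gY x a b c &
          gZ x a b (c+1) = Rz x a b c * gZ x a b c] &
      gX x a b c * gY x a b c * gZ x a b c = Kx x a b c].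
Proof.
move=> G.
have sq : forall a b c, Pi x a b c ^+ 2 = 1 by move=> *; apply: Pi_sq.
have [Ex Ey Ez] := P_sq x a b c G.
have [Sx Sy Sz] := P_succ x a b c G.
split.
- by rewrite /gX /lamx exprMn sq mul1r Ex.
- by rewrite /gY /lamy exprMn (sgn_mul _ _ (sq _ _ _) (sq _ _ _)) mul1r Ey.
- rewrite /gZ /lamz exprMn.
  rewrite (sgn_mul _ _ (sgn_mul _ _ (sgn_mul _ _ (sq _ _ _) (sq _ _ _)) (sq _ _ _)) (sq _ _ _)).
  by rewrite mul1r Ez.
- by split; rewrite /gX /gY /gZ ?Sx ?Sy ?Sz; ring.
have blk : forall p q r,
  Pi x p q r * Pi x (p+1) q r * Pi x p (q+1) r * Pi x (p+1) (q+1) r *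
  Pi x p q (r+1) * Pi x (p+1) q (r+1) * Pi x p (q+1) (r+1) * Pi x (p+1) (q+1) (r+1) = 1.
  by move=> p q r; apply: Pi_block.
have gauge := @gauge3 (Pi x) sq blk a b c.
have KP := K_Pi x a b c G.
transitivity ((lamx x b c * lamy x a c * lamz x a b) * (Px x a b c * Py x a b c * Pz x a b c)).
  by rewrite /gX /gY /gZ; ring.
have -> : lamx x b c * lamy x a c * lamz x a b = Pi x a b c.
  by rewrite gauge /lamx /lamy /lamz; ring.
by rewrite KP.
Qed.

Lemma khex_from (x y fx fy fz : arr3) :
  (forall a b c, x a b c != 0) ->
  (forall a b c, [/\ fx a b c != 0, fy a b c != 0 & fz a b c != 0]) ->
  (forall a b c, fx a b c ^+ 2 = Fx x a b c) ->
  (forall a b c, fy a b c ^+ 2 = Fy x a b c) ->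
  (forall a b c, fz a b c ^+ 2 = Fz x a b c) ->
  (forall a b c, fx (a+1) b c = Rx x a b c * fx a b c) ->
  (forall a b c, fy a (b+1) c = Ry x a b c * fy a b c) ->
  (forall a b c, fz a b (c+1) = Rz x a b c * fz a b c) ->
  (forall a b c, fx a b c * fy a b c * fz a b c = Kx x a b c) ->
  (forall a b c, y (2*a) (2*b) (2*c) = x a b c) ->
  (forall a b c, y (2*a) (2*b+1) (2*c+1) = fx a b c) ->
  (forall a b c, y (2*a+1) (2*b) (2*c+1) = fy a b c) ->
  (forall a b c, y (2*a+1) (2*b+1) (2*c) = fz a b c) ->
  restrZ3 y = x /\ K_hexahedron y.
Proof.
move=> nzx nf Hx Hy Hz Sx Sy Sz HK yv yx yy yz.
have ry : restrZ3 y = x.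
  apply: functional_extensionality => a; apply: functional_extensionality => b.
  apply: functional_extensionality => c; exact: yv.
split => //; split.
- move=> a b c /=; rewrite ry yx yy yz Hx Hy Hz.
  by rewrite /Fx /Fy /Fz.
- move=> a b c /=; rewrite !addr0 !two_step !yv !yx !yy !yz.
  have nz0 := nzx a b c.
  have [n1 n2 n3] := nf a b c.
  split.
  + by rewrite Sx /Rx -HK -Hx; field; rewrite ?nz0 ?n1 ?n2 ?n3.
  + by rewrite Sy /Ry -HK -Hy; field; rewrite ?nz0 ?n1 ?n2 ?n3.
  + by rewrite Sz /Rz -HK -Hz; field; rewrite ?nz0 ?n1 ?n2 ?n3.
  + have n02 : x a b c ^+ 2 != 0 by rewrite expf_eq0.
    apply: (mulIf n02); rewrite divfK // Kdef_x // /Aterm -HK.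
    ring.
Qed.

Definition ybuild (x fx fy fz : arr3) : arr3 := fun i j k =>
  let a := (i %/ 2)%Z in let b := (j %/ 2)%Z in let c := (k %/ 2)%Z in
  if (i %% 2)%Z == 0 then
    (if (j %% 2)%Z == 0 then (if (k %% 2)%Z == 0 then x a b c else 0)
     else (if (k %% 2)%Z == 0 then 0 else fx a b c))
  else (if (j %% 2)%Z == 0 then (if (k %% 2)%Z == 0 then 0 else fy a b c)
        else (if (k %% 2)%Z == 0 then fz a b c else 0)).

Lemma d2 (a : int) : ((2 * a) %/ 2)%Z = a.
Proof. by rewrite mulKz. Qed.
Lemma m2 (a : int) : ((2 * a) %% 2)%Z = 0.
Proof. by rewrite modzMr. Qed.
Lemma d21 (a : int) : ((2 * a + 1) %/ 2)%Z = a.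
Proof. by rewrite mulrC divzMDl // divz_small ?addr0. Qed.
Lemma m21 (a : int) : ((2 * a + 1) %% 2)%Z = 1.
Proof. by rewrite mulrC modzMDl modz_small. Qed.

Lemma ybuild_eval (x fx fy fz : arr3) :
  let y := ybuild x fx fy fz in
  [/\ (forall a b c, y (2*a) (2*b) (2*c) = x a b c),
      (forall a b c, y (2*a) (2*b+1) (2*c+1) = fx a b c),
      (forall a b c, y (2*a+1) (2*b) (2*c+1) = fy a b c) &
      (forall a b c, y (2*a+1) (2*b+1) (2*c) = fz a b c)].
Proof.
by move=> y; split => a b c; rewrite /y /ybuild ?d2 ?m2 ?d21 ?m21 ?eqxx ?oner_eq0.
Qed.

Lemma parta (x : arr3) :
     (forall a b c : int, x a b c != 0) ->
     coherent_Kashaev x ->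
     (forall a b c : int,
        x a b c * x (a + 1) (b + 1) c + x (a + 1) b c * x a (b + 1) c != 0 /\
        x a b c * x (a + 1) b (c + 1) + x (a + 1) b c * x a b (c + 1) != 0 /\
        x a b c * x a (b + 1) (c + 1) + x a (b + 1) c * x a b (c + 1) != 0) ->
     exists y : arr3, restrZ3 y = x /\ K_hexahedron y.
Proof.
move=> nzx [HK Hcoh] Hnd.
have G : Good x.
  split => // a b c; have [h1 [h2 h3]] := Hnd a b c; split.
  - exact: h3.
  - exact: h2.
  - exact: h1.
exists (ybuild x (gX x) (gY x) (gZ x)).
have [yv yx yy yz] := ybuild_eval x (gX x) (gY x) (gZ x).
have [_ _ _ nzF] := G.
apply: khex_from yv yx yy yz => //.
- move=> a b c; have [E1 E2 E3 _ _] := g_props x a b c G.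
  have [n1 n2 n3] := nzF a b c.
  by split; apply: sq_nz; rewrite ?E1 ?E2 ?E3.
- by move=> a b c; case: (g_props x a b c G).
- by move=> a b c; case: (g_props x a b c G).
- by move=> a b c; case: (g_props x a b c G).
- by move=> a b c; have [_ _ _ [] ] := g_props x a b c G.
- by move=> a b c; have [_ _ _ [] ] := g_props x a b c G.
- by move=> a b c; have [_ _ _ [] ] := g_props x a b c G.
- by move=> a b c; case: (g_props x a b c G).
Qed.

Theorem theorem2p22 :
  (* (a) *)
  (forall x : arr3,
     (forall a b c : int, x a b c != 0) ->
     coherent_Kashaev x ->
     (forall a b c : int,
        x a b c * x (a + 1) (b + 1) c + x (a + 1) b c * x a (b + 1) c != 0 /\
        x a b c * x (a + 1) b (c + 1) + x (a + 1) b c * x a b (c + 1) != 0 /\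
        x a b c * x a (b + 1) (c + 1) + x a (b + 1) c * x a b (c + 1) != 0) ->
     exists y : arr3, restrZ3 y = x /\ K_hexahedron y)
  /\
  (* (b) *)
  (forall y : arr3,
     (forall a b c : int, restrZ3 y a b c != 0) ->
     K_hexahedron y ->
     coherent_Kashaev (restrZ3 y)).
Proof.
split; [exact: parta | exact: partb].
Qed.
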